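(* For $i=1,\dots,k$, let $\mathcal{E}_i$ be Euclidean spaces and $h_i\colon \mathcal{E}_i\to\mathbb{R}^{m_i}$ be $C^\infty$ functions such that each $h_i$ satisfies assumptions (A1), (A2), (A3) (stated in the context) with constants $R_i$, $\underline{\sigma}_i$ and $C_{h_i}$ respectively. Let $\mathcal{E}=\mathcal{E}_1\times\cdots\times\mathcal{E}_k$, $m=m_1+\cdots+m_k$, and define $h\colon\mathcal{E}\to\mathbb{R}^m$ by $h(x_1,\dots,x_k)=(h_1(x_1),\dots,h_k(x_k))^\top$. Then $h$ satisfies (A1), (A2) and (A3) with constants $R=\min(R_1,\dots,R_k)$, $\underline{\sigma}=\min(\underline{\sigma}_1,\dots,\underline{\sigma}_k)$ and $C_h=\max(C_{h_1},\dots,C_{h_k})$.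
   Context: For a $C^\infty$ map $h\colon\mathcal{E}\to\mathbb{R}^m$ on a Euclidean space $\mathcal{E}$ (norm $\|\cdot\|$; on $\mathbb{R}^m$ the 2-norm), write $\mathrm{D}h(x)$ for its differential and $\sigma_{\min}(A)=\sigma_m(A)$ for the $m$-th (smallest) singular value of a linear map $A\colon\mathcal{E}\to\mathbb{R}^m$. (A1) with constants $R,\underline{\sigma}>0$: for all $x$ in $\mathcal{C}=\{x\in\mathcal{E}:\|h(x)\|\le R\}$ one has $\sigma_{\min}(\mathrm{D}h(x))\ge\underline{\sigma}$. (A2): the sets $\mathcal{M}=\{x\in\mathcal{E}:h(x)=0\}$ and $\mathcal{C}=\{x:\|h(x)\|\le R\}$ are compact. (A3) with constant $C_h>0$: for all $x\in\mathcal{C}$ and $v\in\mathcal{E}$, $h(x+v)=h(x)+\mathrm{D}h(x)[v]+E(x,v)$ with $\|E(x,v)\|\le C_h\|v\|^2$. *)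

(* Defs.v *)
From HB Require Import structures.
From mathcomp Require Import all_boot all_order all_algebra.
From mathcomp Require Import all_classical all_reals all_analysis.
Set Implicit Arguments. Unset Strict Implicit. Unset Printing Implicit Defensive.
Import Order.TTheory GRing.Theory Num.Theory.
Import numFieldNormedType.Exports.
Local Open Scope classical_set_scope.
Local Open Scope ring_scope.

Section Defs.
Variable R : realType.

(* A Euclidean space of dimension n is modelled as 'rV[R]_n with the
   Euclidean (2-)norm; R^m likewise. *)
Definition enorm n (x : 'rV[R]_n) : R := Num.sqrt (\sum_(j < n) x ord0 j ^+ 2).

(* Matrix (for the action v |-> v *m A on row vectors) of the differential. *)
Definition Dmx n m (h : 'rV[R]_n -> 'rV[R]_m) (x : 'rV[R]_n) : 'M[R]_(n, m) :=
  lin1_mx ('d h x).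

Fixpoint Ck (k : nat) (n p : nat) (f : 'rV[R]_n -> 'rV[R]_p) : Prop :=
  match k with
  | 0 => continuous f
  | k'.+1 => (forall x, differentiable f x) /\
             Ck k' (fun x => mxvec (lin1_mx ('d f x)))
  end.
Definition smooth n p (f : 'rV[R]_n -> 'rV[R]_p) := forall k, Ck k f.

(* sigma_min(A) = sigma_m(A) for a linear map A : E -> R^m, given by its
   matrix A : 'M_(n,m) (acting v |-> v *m A).  Its adjoint is y |-> y *m A^T,
   so A A^* has matrix A^T *m A; the singular values sigma_1..sigma_m are the
   square roots of the eigenvalues of A A^*, the m-th (smallest) being the
   square root of the least eigenvalue. *)
Definition sigma_min n m (A : 'M[R]_(n, m)) : R :=
  Num.sqrt (inf [set a : R | eigenvalue (A^T *m A) a]).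

Definition A1 n m (h : 'rV[R]_n -> 'rV[R]_m) (Rc sig : R) : Prop :=
  0 < Rc /\ 0 < sig /\
  forall x, enorm (h x) <= Rc -> sig <= sigma_min (Dmx h x).

Definition A2 n m (h : 'rV[R]_n -> 'rV[R]_m) (Rc : R) : Prop :=
  compact [set x | h x = 0] /\ compact [set x | enorm (h x) <= Rc].

Definition A3 n m (h : 'rV[R]_n -> 'rV[R]_m) (Rc Ch : R) : Prop :=
  0 < Ch /\
  forall x v, enorm (h x) <= Rc ->
    enorm (h (x + v) - h x - 'd h x v) <= Ch * enorm v ^+ 2.

(* min / max of finitely many reals indexed by 'I_k (k >= 1; value 0 if k = 0) *)
Definition bigminr k : ('I_k -> R) -> R :=
  match k with
  | 0 => fun _ => 0
  | k'.+1 => fun f => \big[Num.min/f ord0]_(i < k'.+1) f i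
  end.
Definition bigmaxr k : ('I_k -> R) -> R :=
  match k with
  | 0 => fun _ => 0
  | k'.+1 => fun f => \big[Num.max/f ord0]_(i < k'.+1) f i
  end.

(* The product map h(x_1,..,x_k) = (h_1(x_1),..,h_k(x_k)) on
   E = E_1 x .. x E_k = 'rV_(\sum n_i), with x_i = submxrow x i. *)
Definition hprod k (n m : 'I_k -> nat)
  (h : forall i, 'rV[R]_(n i) -> 'rV[R]_(m i))
  (x : 'rV[R]_(\sum_(i < k) n i)) : 'rV[R]_(\sum_(i < k) m i) :=
  mxrow (fun i => h i (submxrow x i)).

End Defs.

(* Main.v *)
Require Import Defs.
From HB Require Import structures.
From mathcomp Require Import all_boot all_order all_algebra.
From mathcomp Require Import all_classical all_reals all_analysis.
Import Order.TTheory GRing.Theory Num.Theory.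
Import numFieldNormedType.Exports.
Local Open Scope ring_scope.
Set Implicit Arguments. Unset Strict Implicit. Unset Printing Implicit Defensive.

Section Gen.
Variable R : realType.

Definition en2 n (x : 'rV[R]_n) : R := \sum_(j < n) x ord0 j ^+ 2.

Lemma en2_ge0 n (x : 'rV[R]_n) : 0 <= en2 x.
Proof. by apply: sumr_ge0 => j _; apply: sqr_ge0. Qed.

Lemma enormE n (x : 'rV[R]_n) : enorm x = Num.sqrt (en2 x).
Proof. by []. Qed.

Lemma enorm_ge0 n (x : 'rV[R]_n) : 0 <= enorm x.
Proof. exact: sqrtr_ge0. Qed.

Lemma enorm_sq n (x : 'rV[R]_n) : enorm x ^+ 2 = en2 x.
Proof. by rewrite enormE sqr_sqrtr // en2_ge0. Qed.

Lemma en2_mx n (x : 'rV[R]_n) : en2 x = (x *m x^T) ord0 ord0.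
Proof. by rewrite mxE; apply: eq_bigr => j _; rewrite mxE expr2. Qed.

Lemma en2_mxrow k (p : 'I_k -> nat) (u : forall i, 'rV[R]_(p i)) :
  en2 (\mxrow_i u i) = \sum_i en2 (u i).
Proof.
rewrite en2_mx tr_mxrow mul_mxrow_mxcol summxE.
by apply: eq_bigr => i _; rewrite en2_mx.
Qed.

Lemma enorm_mxrow_sq k (p : 'I_k -> nat) (u : forall i, 'rV[R]_(p i)) :
  enorm (\mxrow_i u i) ^+ 2 = \sum_i enorm (u i) ^+ 2.
Proof. by rewrite enorm_sq en2_mxrow; apply: eq_bigr => i _; rewrite enorm_sq. Qed.

Lemma enorm_mxrow_le k (p : 'I_k -> nat) (u : forall i, 'rV[R]_(p i)) i :
  enorm (u i) <= enorm (\mxrow_j u j).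
Proof.
rewrite !enormE ler_sqrt ?en2_ge0 // en2_mxrow (bigD1 i) //= lerDl.
by apply: sumr_ge0 => j _; apply: en2_ge0.
Qed.

Lemma enorm_submx_le k (p : 'I_k -> nat) (x : 'rV[R]_(\sum_i p i)) i :
  enorm (submxrow x i) <= enorm x.
Proof. by rewrite -{2}(submxrowK x) enorm_mxrow_le. Qed.

Lemma coord_le_norm p q (v : 'M[R]_(p, q)) i j : `|v i j| <= `|v|.
Proof.
have -> : `|v| = mx_norm v by [].
rewrite mx_normrE.
by apply/bigmax_geP; right => /=; exists (i, j).
Qed.

Lemma norm_le_enorm n (w : 'rV[R]_n) : `|w| <= enorm w.
Proof.
have -> : `|w| = mx_norm w by [].
rewrite mx_normrE.
apply: bigmax_le; first exact: enorm_ge0.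
move=> [i j] _ /=; rewrite (ord1 i) enormE -sqrtr_sqr ler_sqrt ?en2_ge0 //.
rewrite /en2 (bigD1 j) //= lerDl.
by apply: sumr_ge0 => l _; apply: sqr_ge0.
Qed.

Lemma en2_le_norm n (v : 'rV[R]_n) : en2 v <= n%:R * `|v| ^+ 2.
Proof.
rewrite /en2 mulr_natl -[n in _ *+ n]card_ord -sumr_const.
apply: ler_sum => j _; rewrite -real_normK ?num_real //.
by rewrite ler_sqr ?nnegrE // coord_le_norm.
Qed.

Lemma mulmx_norm_le p q (v : 'rV[R]_p) (B : 'M[R]_(p, q)) :
  `|v *m B| <= p%:R * `|B| * `|v|.
Proof.
have -> : `|v *m B| = mx_norm (v *m B) by [].
rewrite mx_normrE.
apply: bigmax_le; first by rewrite !mulr_ge0.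
move=> [i j] _ /=; rewrite mxE (le_trans (ler_norm_sum _ _ _)) //.
rewrite -mulrA mulr_natl -[p in _ *+ p]card_ord -sumr_const.
apply: ler_sum => l _; rewrite normrM mulrC ler_pM //.
  exact: coord_le_norm.
exact: coord_le_norm.
Qed.

Lemma enorm_split k (p : 'I_k -> nat) (v : 'rV[R]_(\sum_i p i)) :
  enorm v ^+ 2 = \sum_i enorm (submxrow v i) ^+ 2.
Proof. by have := enorm_mxrow_sq (fun i => submxrow v i); rewrite submxrowK. Qed.

End Gen.

Unset Implicit Arguments.
Set Strict Implicit.

Section Gen2.
Variable R : realType.

Lemma lin_cont (V W : normedModType R) (f : {linear V -> W}) (K : R) :
  (forall v, `|f v| <= K * `|v|) -> continuous f.
Proof.
move=> fK; apply: bounded_linear_continuous.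
exists (Num.max K 0); split; first by rewrite num_real.
move=> M HM; apply: filterS (nbhs0_le (@ltr01 R)) => v /= hv.
apply: (le_trans (fK v)); apply: ltW; apply: le_lt_trans HM.
apply: (@le_trans _ _ (Num.max K 0 * `|v|)).
  by apply: ler_wpM2r => //; rewrite le_max lexx.
by rewrite -[X in _ <= X]mulr1; apply: ler_wpM2l => //; rewrite le_max lexx orbT.
Qed.

Section Blocks.
Variables (k : nat) (p : 'I_k -> nat).

Definition Pm i : 'M[R]_(\sum_j p j, p i) := submxrow 1%:M i.

Lemma mulPm a (v : 'M[R]_(a, \sum_j p j)) i : v *m Pm i = submxrow v i.
Proof. by rewrite /Pm mul_submxrow mulmx1. Qed.

Lemma mxrow_sumP a (Y : forall i, 'M[R]_(a, p i)) :
  \mxrow_i Y i = \sum_i Y i *m (Pm i)^T.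
Proof.
rewrite -[LHS]mulmx1 -[X in _ *m X](submxcolK 1%:M) mul_mxrow_mxcol.
by apply: eq_bigr => i _; rewrite /Pm tr_submxrow trmx1.
Qed.

Lemma submxrowZ a (c : R) (v : 'M[R]_(a, \sum_j p j)) i :
  submxrow (c *: v) i = c *: submxrow v i.
Proof. by rewrite -!mulPm scalemxAl. Qed.

Lemma mxrow_eq0 a (v : 'M[R]_(a, \sum_j p j)) :
  (forall i, submxrow v i = 0) -> v = 0.
Proof. by move=> H; apply/mxrowP => i; rewrite H submxrow0. Qed.

End Blocks.
Arguments Pm {k} p i.

Lemma sum_sq_le k (a : 'I_k -> R) : (forall i, 0 <= a i) ->
  \sum_i a i ^+ 2 <= (\sum_i a i) ^+ 2.
Proof.
move=> a0; rewrite [X in _ <= X]expr2 mulr_suml; apply: ler_sum => i _.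
rewrite expr2 ler_wpM2l // (bigD1 i) //= lerDl.
by apply: sumr_ge0.
Qed.

Section Diff.
Variables (k : nat) (n m : 'I_k -> nat)
  (h : forall i, 'rV[R]_(n i) -> 'rV[R]_(m i)).
Variables (x : 'rV[R]_(\sum_i n i)) (C : R).
Hypothesis C0 : 0 <= C.
Hypothesis hA3 : forall (i : 'I_k) (v : 'rV[R]_(n i)), enorm (h i (submxrow x i + v) - h i (submxrow x i)
   - 'd (h i) (submxrow x i) v) <= C * enorm v ^+ 2.

Definition err (v : 'rV[R]_(\sum_i n i)) := @mxrow R k m 1 (fun i => h i (submxrow x i + submxrow v i)
   - h i (submxrow x i) - 'd (h i) (submxrow x i) (submxrow v i)).

Lemma err_bound v : enorm (err v) <= C * enorm v ^+ 2.
Proof.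
have ge : 0 <= C * enorm v ^+ 2 by rewrite mulr_ge0 ?sqr_ge0.
rewrite -ler_sqr ?nnegrE ?enorm_ge0 // /err.
rewrite enorm_mxrow_sq.
rewrite enorm_split mulr_sumr.
apply: (@le_trans _ _ (\sum_i (C * enorm (submxrow v i) ^+ 2) ^+ 2)); last first.
  by apply: sum_sq_le => i; rewrite mulr_ge0 ?sqr_ge0.
apply: ler_sum => i _.
by rewrite ler_sqr ?nnegrE ?enorm_ge0 ?mulr_ge0 ?sqr_ge0 //; apply: enorm_ge0.
Qed.

Definition Bm : 'M[R]_(\sum_i n i, \sum_i m i) :=
  \mxrow_i (Pm n i *m Dmx (h i) (submxrow x i)).

Lemma Bm_mul v : v *m Bm = \mxrow_i ('d (h i) (submxrow x i) (submxrow v i)).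
Proof.
rewrite mul_mxrow; apply: eq_mxrow => i.
by rewrite mulmxA mulPm /Dmx mul_rV_lin1.
Qed.

Lemma dH : 'd (hprod h) x = (fun v => v *m Bm) :> (_ -> _).
Proof.
apply: (@diff_unique _ _ _ _ (mulmxr Bm)).
  apply: (@lin_cont _ _ _ ((\sum_i n i)%:R * `|Bm|)) => v /=.
  exact: mulmx_norm_le.
apply/eqaddoP => e e0.
set N := (\sum_i n i)%N.
have K0 : 0 < C * N%:R + 1 by rewrite ltr_wpDl ?mulr_ge0.
near=> v.
have -> : ((hprod h \o shift x) - (cst (hprod h x) + mulmxr Bm)) v = err v.
  change (hprod h (v + x) - (hprod h x + v *m Bm) = err v).
  rewrite /hprod Bm_mul opprD addrA -!mxrowB; apply: eq_mxrow => i.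
  by rewrite submxrowD [submxrow v i + _]addrC.
apply: (le_trans (norm_le_enorm _)); apply: (le_trans (err_bound v)).
rewrite enorm_sq (le_trans (ler_wpM2l C0 (en2_le_norm v))) //= mulrA expr2 mulrA.
apply: ler_wpM2r => //.
have hv : `|v| <= e / (C * N%:R + 1) .
  near: v. by apply: (@nbhs0_le _ 'rV[R]_N); rewrite divr_gt0.
apply: (le_trans (ler_wpM2l (mulr_ge0 C0 (ler0n _ _)) hv)).
rewrite mulrCA ger_pMr // ler_pdivrMr // mul1r.
by rewrite lerDl.
Unshelve. all: by end_near. Qed.

Lemma A3_at v : enorm (hprod h (x + v) - hprod h x - 'd (hprod h) x v)
  <= C * enorm v ^+ 2.
Proof.
have -> : 'd (hprod h) x v = v *m Bm by rewrite dH.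
apply: le_trans (err_bound v); rewrite le_eqVlt; apply/orP; left; apply/eqP.
congr enorm.
rewrite /hprod Bm_mul -!mxrowB; apply: eq_mxrow => i.
by rewrite submxrowD.
Qed.

Lemma DmxH : Dmx (hprod h) x = Bm.
Proof.
rewrite /Dmx dH; apply/matrixP => i j.
by rewrite mxE -rowE mxE.
Qed.

Lemma BtB (w : 'rV[R]_(\sum_i m i)) :
  w *m (Bm^T *m Bm) = \mxrow_j (submxrow w j *m
     ((Dmx (h j) (submxrow x j))^T *m Dmx (h j) (submxrow x j))).
Proof.
rewrite mulmxA.
have -> : w *m Bm^T = \mxrow_i (submxrow w i *m (Dmx (h i) (submxrow x i))^T).
  rewrite /Bm tr_mxrow -{1}(submxrowK w) mul_mxrow_mxcol mxrow_sumP.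
  by apply: eq_bigr => i _; rewrite trmx_mul mulmxA.
rewrite /Bm mul_mxrow; apply: eq_mxrow => j.
by rewrite mulmxA mulPm mxrowK mulmxA.
Qed.

End Diff.
End Gen2.

Section Eig.
Variable R : realType.

Lemma en2_eq0 n (v : 'rV[R]_n) : en2 v = 0 -> v = 0.
Proof.
move=> /psumr_eq0P H; apply/rowP => j; rewrite mxE.
by apply/eqP; rewrite -sqrf_eq0; apply/eqP; apply: H => // i _; apply: sqr_ge0.
Qed.

Lemma eig_ge0 p q (M : 'M[R]_(p, q)) a : eigenvalue (M^T *m M) a -> 0 <= a.
Proof.
case/eigenvalueP => v hv vn0.
have e1 : (v *m (M^T *m M) *m v^T) ord0 ord0 = a * en2 v.
  by rewrite hv -scalemxAl mxE en2_mx.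
have e2 : (v *m (M^T *m M) *m v^T) ord0 ord0 = en2 (v *m M^T).
  by rewrite en2_mx trmx_mul trmxK !mulmxA.
have pos : 0 < en2 v.
  rewrite lt_neqAle en2_ge0 andbT eq_sym; apply/eqP => /en2_eq0 v0.
  by rewrite v0 eqxx in vn0.
by rewrite -(pmulr_lge0 _ pos) -e1 e2 en2_ge0.
Qed.

Definition eigs q (G : 'M[R]_q) := [set a : R | eigenvalue G a]%classic.
Arguments eigs {q}.

Lemma inf_eig_le p q (M : 'M[R]_(p, q)) a :
  eigenvalue (M^T *m M) a -> inf (eigs (M^T *m M)) <= a.
Proof.
move=> ha; apply: (ge_inf _ ha); by exists 0; move=> y; exact: eig_ge0.
Qed.

Lemma inf_eig_ge0 p q (M : 'M[R]_(p, q)) : 0 <= inf (eigs (M^T *m M)).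
Proof.
have [[a Ha]|E] := pselect (exists a, eigs (M^T *m M) a).
  apply: lb_le_inf; [by exists a | move=> y hy; exact: eig_ge0 hy].
have -> : eigs (M^T *m M) = set0.
  by rewrite predeqE => a; split => // Ha; apply: E; exists a.
by rewrite inf0.
Qed.

Section Lift.
Variables (k : nat) (m : 'I_k -> nat) (j0 : 'I_k) (u : 'rV[R]_(m j0)).

Definition liftv (j : 'I_k) : 'rV[R]_(m j) :=
  match @eqP _ j0 j with
  | ReflectT e => castmx (erefl 1%N, congr1 m e) u
  | ReflectF _ => 0
  end.

Lemma liftv_eq : liftv j0 = u.
Proof.
rewrite /liftv; case: eqP => // e.
by rewrite (eq_irrelevance (congr1 m e) (erefl (m j0))) castmx_id.
Qed.

Lemma liftv_neq j : j0 != j -> liftv j = 0.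
Proof. by rewrite /liftv; case: eqP. Qed.

End Lift.
End Eig.

Arguments Bm {R k n m} h x.
Arguments BtB {R k n m} h x w.
Arguments liftv {R k m j0} u j : simpl never.
Arguments liftv_eq {R k m j0} u.
Arguments liftv_neq {R k m j0} u [j].
Arguments mxrow_eq0 {R k p a} v.
Arguments submxrowZ {R k p a} c v i.
Arguments inf_eig_le {R p q M a}.
Arguments inf_eig_ge0 {R p q} M.
Arguments eigs {R q} G.

Section A1.
Variable R : realType.

Lemma sigma_minE p q (M : 'M[R]_(p, q)) :
  sigma_min M = Num.sqrt (inf (eigs (M^T *m M))).
Proof. by []. Qed.

Lemma A1_at k (n m : 'I_k -> nat) (h : forall i, 'rV[R]_(n i) -> 'rV[R]_(m i))
  (x : 'rV[R]_(\sum_i n i)) (j0 : 'I_k) (s : R) (s0 : 0 < s)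
  (hs : forall i, s <= sigma_min (Dmx (h i) (submxrow x i))) :
  s <= sigma_min (Bm h x).
Proof.
set D := fun i => Dmx (h i) (submxrow x i).
have key : forall i a, eigenvalue ((D i)^T *m D i) a -> s ^+ 2 <= a.
  move=> i a ha; have := hs i; rewrite sigma_minE => hsi.
  apply: le_trans (inf_eig_le ha).
  rewrite -(sqr_sqrtr (inf_eig_ge0 (D i))).
  by rewrite ler_sqr ?nnegrE ?sqrtr_ge0 ?(ltW s0).
have ne : exists a, eigenvalue ((Bm h x)^T *m Bm h x) a.
  have := hs j0; rewrite sigma_minE.
  have [[a0 Ha0]|E] := pselect (exists a, eigs ((D j0)^T *m D j0) a); last first.
    rewrite (_ : eigs _ = set0) ?inf0 ?sqrtr0 => [hle|].
      by move: s0; rewrite ltNge hle.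
    by rewrite predeqE => a; split => // Ha; apply: E; exists a.
  move=> _; case/eigenvalueP: Ha0 => u hu un0.
  exists a0; apply/eigenvalueP; exists (@mxrow R k m 1 (fun j => liftv u j)).
    rewrite BtB; apply/mxrowP => j; rewrite submxrowZ !mxrowK.
    case: (eqVneq j0 j) => [<-|ne]; first by rewrite liftv_eq.
    by rewrite liftv_neq // mul0mx scaler0.
  apply/eqP => w0; have := congr1 (fun w => submxrow w j0) w0.
  rewrite /= mxrowK liftv_eq submxrow0 => u0.
  by rewrite u0 eqxx in un0.
have hinf : s ^+ 2 <= inf (eigs ((Bm h x)^T *m Bm h x)).
  apply: lb_le_inf; first by case: ne => a Ha; exists a.
  move=> a /= /eigenvalueP [v hv vn0].
  case: (pselect (exists j, submxrow v j != 0)) => [[j hj]|nj]; last first.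
    have v0 : v = 0.
      apply: mxrow_eq0 => j; apply/eqP; apply/negPn/negP => hj.
      by apply: nj; exists j.
    by rewrite v0 eqxx in vn0.
  apply: (key j); apply/eigenvalueP; exists (submxrow v j) => //.
  have := congr1 (fun w => submxrow w j) hv.
  by rewrite /= BtB mxrowK submxrowZ.
rewrite sigma_minE -(ger0_norm (ltW s0)) -sqrtr_sqr ler_sqrt //.
exact: le_trans (sqr_ge0 s) hinf.
Qed.

End A1.

Local Open Scope classical_set_scope.

Arguments Pm {R k} p i.
Arguments mulPm {R k p a} v i.
Arguments mxrow_sumP {R k p a} Y.

Section A2.
Variable R : realType.

Lemma cont_sum (T : topologicalType) I (r : seq I) (f : I -> T -> R) :
  (forall i, continuous (f i)) -> continuous (fun x => \sum_(i <- r) f i x).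
Proof.
move=> fc; elim: r => [|a r IH].
  have -> : (fun x => \sum_(i <- [::]) f i x) = fun=> 0.
    by apply: funext => x; rewrite big_nil.
  exact: cst_continuous.
have -> : (fun x => \sum_(i <- a :: r) f i x) =
   (f a + (fun x => \sum_(i <- r) f i x))%R.
  by apply: funext => x; rewrite big_cons.
by move=> x; apply: continuousD; [apply: fc | apply: IH].
Qed.

Lemma en2_cont n : continuous (fun x : 'rV[R]_n => en2 x).
Proof.
apply: cont_sum => j x.
have -> : (fun x0 : 'rV[R]_n => x0 ord0 j ^+ 2) =
   ((fun x0 : 'rV[R]_n => x0 ord0 j) \* (fun x0 : 'rV[R]_n => x0 ord0 j))%R.
  by apply: funext => y; rewrite expr2.
by apply: continuousM; apply: coord_continuous.
Qed.

Lemma enorm_cont n : continuous (fun x : 'rV[R]_n => enorm x).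
Proof.
move=> x; apply: (@continuous_comp _ _ _ (fun x : 'rV[R]_n => en2 x) Num.sqrt).
  exact: en2_cont.
exact: sqrt_continuous.
Qed.

Lemma mulmx_cont p q (B : 'M[R]_(p, q)) : continuous (fun v : 'rV[R]_p => v *m B).
Proof.
apply: (@lin_cont R _ _ (mulmxr B) (p%:R * `|B|)) => v /=.
exact: mulmx_norm_le.
Qed.

Lemma submxrow_cont k (p : 'I_k -> nat) i :
  continuous (fun v : 'rV[R]_(\sum_j p j) => submxrow v i).
Proof.
have -> : (fun v : 'rV[R]_(\sum_j p j) => submxrow v i) = (fun v => v *m Pm p i).
  by apply: funext => v; rewrite mulPm.
exact: mulmx_cont.
Qed.

Lemma prod_compact k (p : 'I_k -> nat) (A : forall i, set 'rV[R]_(p i))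
  (cA : forall i, compact (A i)) (S : set 'rV[R]_(\sum_i p i)) :
  closed S -> (forall x, S x -> forall i, A i (submxrow x i)) -> compact S.
Proof.
move=> Scl SA; apply: bounded_closed_compact => //.
have : forall i, exists M : R, forall y, A i y -> `|y| <= M.
  move=> i; have [M [_ HM]] := compact_bounded (cA i).
  by exists (M + 1); apply: HM; rewrite ltrDl.
case/choice => Mf HMf.
set K := \sum_i (p i)%:R * `|(Pm p i)^T| * Mf i.
exists K; split; first by rewrite num_real.
move=> M KM x Sx; apply: ltW; apply: le_lt_trans KM.
rewrite -(submxrowK x) mxrow_sumP.
apply: (le_trans (ler_norm_sum _ _ _)); apply: ler_sum => i _.
apply: (le_trans (mulmx_norm_le _ _)).
apply: ler_wpM2l; first by rewrite mulr_ge0.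
exact: HMf (SA x Sx i).
Qed.

End A2.

Local Open Scope classical_set_scope.

Arguments DmxH {R k n m h x C} C0 hA3.
Arguments A3_at {R k n m h x C} C0 hA3 v.

Lemma enorm_hprod_le (R : realType) k (n m : 'I_k -> nat)
  (h : forall i, 'rV[R]_(n i) -> 'rV[R]_(m i)) x i :
  enorm (h i (submxrow x i)) <= enorm (hprod h x).
Proof. exact: (enorm_mxrow_le (fun i => h i (submxrow x i))). Qed.

Lemma enorm_hprodE (R : realType) k (n m : 'I_k -> nat)
  (h : forall i, 'rV[R]_(n i) -> 'rV[R]_(m i)) x :
  enorm (hprod h x) = Num.sqrt (\sum_i en2 (h i (submxrow x i))).
Proof. by rewrite enormE -(en2_mxrow (fun i => h i (submxrow x i))). Qed.

Arguments enorm_hprod_le {R k n m} h x i.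
Arguments enorm_hprodE {R k n m} h x.
Arguments A1_at {R k n m h x} j0 {s} s0 hs.

Theorem mainTheorem1 (R : realType) (k : nat) (n m : 'I_k -> nat)
  (h : forall i, 'rV[R]_(n i) -> 'rV[R]_(m i))
  (Rs sigs Chs : 'I_k -> R) :
  (0 < k)%N ->
  (forall i, smooth (h i)) ->
  (forall i, A1 (h i) (Rs i) (sigs i)) ->
  (forall i, A2 (h i) (Rs i)) ->
  (forall i, A3 (h i) (Rs i) (Chs i)) ->
  A1 (hprod h) (bigminr Rs) (bigminr sigs) /\
  A2 (hprod h) (bigminr Rs) /\
  A3 (hprod h) (bigminr Rs) (bigmaxr Chs).
Proof.
case: k n m h Rs sigs Chs => [//|k] n m h Rs sigs Chs _ hsm hA1 hA2 hA3.
rewrite /bigminr /bigmaxr.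
set Rmin := \big[Num.min/Rs ord0]_(i < k.+1) Rs i.
set smin := \big[Num.min/sigs ord0]_(i < k.+1) sigs i.
set Cmax := \big[Num.max/Chs ord0]_(i < k.+1) Chs i.
have RminE i : Rmin <= Rs i by apply: bigmin_le.
have sminE i : smin <= sigs i by apply: bigmin_le.
have CmaxE i : Chs i <= Cmax by apply: le_bigmax.
have Rmin0 : 0 < Rmin.
  apply: (big_ind (fun r : R => 0 < r)); first by case: (hA1 ord0).
    by move=> a b ha hb; rewrite lt_min ha hb.
  by move=> i _; case: (hA1 i).
have smin0 : 0 < smin.
  apply: (big_ind (fun r : R => 0 < r)); first by case: (hA1 ord0) => _ [].
    by move=> a b ha hb; rewrite lt_min ha hb.
  by move=> i _; case: (hA1 i) => _ [].
have Cmax0 : 0 < Cmax.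
  apply: (big_ind (fun r : R => 0 < r)); first by case: (hA3 ord0).
    by move=> a b ha hb; rewrite lt_max ha.
  by move=> i _; case: (hA3 i).
have hcont i : continuous (h i) by exact: (hsm i 0%N).
have loc x : enorm (hprod h x) <= Rmin -> forall (i : 'I_k.+1) (v : 'rV[R]_(n i)),
    enorm (h i (submxrow x i + v) - h i (submxrow x i)
      - 'd (h i) (submxrow x i) v) <= Cmax * enorm v ^+ 2.
  move=> hx i v; case: (hA3 i) => _ H.
  have hi : enorm (h i (submxrow x i)) <= Rs i.
    by apply: le_trans (enorm_hprod_le h x i) (le_trans hx (RminE i)).
  apply: le_trans (H _ v hi) _.
  by apply: ler_wpM2r; [apply: sqr_ge0 | apply: CmaxE].
have Fc : continuous (fun x => enorm (hprod h x)).
  have -> : (fun x => enorm (hprod h x)) =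
      (fun x => Num.sqrt (\sum_i en2 (h i (submxrow x i)))).
    by apply: funext => x; rewrite enorm_hprodE.
  move=> x; apply: (@continuous_comp _ _ _
     (fun x => \sum_i en2 (h i (submxrow x i))) Num.sqrt); last first.
    exact: sqrt_continuous.
  apply: (@cont_sum R _ _ _ (fun i x => en2 (h i (submxrow x i)))) => i y.
  apply: (@continuous_comp _ _ _ (fun y => h i (submxrow y i)) (@en2 R (m i))).
    apply: (@continuous_comp _ _ _ (fun y => submxrow y i) (h i)).
      exact: submxrow_cont.
    exact: hcont.
  exact: en2_cont.
split; [|split].
- split; first exact: Rmin0.
  split; first exact: smin0.
  move=> x hx; rewrite (DmxH (ltW Cmax0) (loc x hx)).
  apply: (A1_at ord0 smin0) => i.
  apply: le_trans (sminE i) _.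
  case: (hA1 i) => _ [_ H]; apply: H.
  by apply: le_trans (enorm_hprod_le h x i) (le_trans hx (RminE i)).
- split.
  + apply: (@prod_compact R _ n (fun i => [set y | h i y = 0])).
      by move=> i; case: (hA2 i).
      have -> : [set x | hprod h x = 0] = (fun x => enorm (hprod h x)) @^-1` [set 0].
        rewrite predeqE => x /=; split => [->|].
          by rewrite enormE /en2 big1 ?sqrtr0 // => j _; rewrite mxE expr0n.
        move/eqP; rewrite enormE sqrtr_eq0 => h0; apply: en2_eq0.
        by apply/eqP; rewrite eq_le h0 en2_ge0.
      by apply: preimage_closed; [move=> y _; exact: Fc | exact: closed_eq].
    move=> x /= hx i.
    have := congr1 (fun w => submxrow w i) hx.
    by rewrite /hprod /= mxrowK submxrow0.
  + apply: (@prod_compact R _ n (fun i => [set y | enorm (h i y) <= Rs i])).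
      by move=> i; case: (hA2 i).
      have -> : [set x | enorm (hprod h x) <= Rmin] =
          (fun x => enorm (hprod h x)) @^-1` [set r | r <= Rmin] by [].
      by apply: preimage_closed; [move=> y _; exact: Fc | exact: closed_le].
    move=> x /= hx i.
    by apply: le_trans (enorm_hprod_le h x i) (le_trans hx (RminE i)).
- split; first exact: Cmax0.
  move=> x v hx; exact: (A3_at (ltW Cmax0) (loc x hx)).
Qed.
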